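(* Let $V$ be a finite-dimensional real vector space with a Lorentzian inner product $g$, and let $V=E_1\oplus\cdots\oplus E_r$ ($r\ge 1$) be a $g$-orthogonal direct sum of subspaces on each of which $g$ is non-degenerate, with $E_r$ Lorentzian. For $1\le\beta\le r$ let $g_\beta$ be the symmetric bilinear form $g_\beta(X,Y)=g(X_\beta,Y_\beta)$, where $X_\beta,Y_\beta$ are the $E_\beta$-components of $X,Y$. Let $p\in E_r$ be a non-zero light-like vector and $\theta=g(p,\cdot)$. Let $\bar g_1=g,\bar g_2,\dots,\bar g_{r+1}$ be linearly independent symmetric bilinear forms on $V$ of the form $$\bar g_\alpha=\sum_{\beta=1}^r C_{\beta\alpha}g_\beta+C_{r+1\,\alpha}\,\theta\otimes\theta,\qquad C_{\beta\alpha}\in\mathbb{R},$$ and assume $C_{r\alpha}=0$ for all $2\le\alpha\le r+1$. Let $2\le\alpha\le r+1$. If $C_{r+1\,\alpha}=0$, then $$\ker\bar g_\alpha=\bigoplus_{1\le\beta\le r,\ C_{\beta\alpha}=0}E_\beta\quad\text{and}\quad \ker\big(g|_{\ker\bar g_\alpha\times\ker\bar g_\alpha}\big)=0.$$ If $C_{r+1\,\alpha}\neq0$, then $$\ker\bar g_\alpha=\bigoplus_{1\le\beta\le r-1,\ C_{\beta\alpha}=0}E_\beta\ \oplus\ \{X\in E_r\mid\theta(X)=0\}\quad\text{and}\quad \ker\big(g|_{\ker\bar g_\alpha\times\ker\bar g_\alpha}\big)=\mathbb{R}p.$$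
   Context: For a symmetric bilinear form $b$ on $V$, $\ker b=\{X\in V\mid b(X,Y)=0\ \forall Y\in V\}$. For a subspace $U$, $g|_{U\times U}$ denotes the restriction of $g$ to $U$ and $\ker(g|_{U\times U})=\{X\in U\mid g(X,Y)=0\ \forall Y\in U\}$. (In the paper, $V=T_xM$ for a Lorentzian manifold and the $E_\beta$ come from its Wu decomposition; the forms $\bar g_\alpha$ are a basis of parallel symmetric bilinear forms evaluated at $x$.) *)

(* Defs.v *)
From HB Require Import structures.
From mathcomp Require Import all_boot all_order all_algebra.
From mathcomp Require Import reals.
Set Implicit Arguments. Unset Strict Implicit. Unset Printing Implicit Defensive.
Import Order.TTheory GRing.Theory Num.Theory.
Local Open Scope ring_scope.

Section Forms.
Variables (R : realType) (V : vectType R).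

Definition is_bilin_form (b : V -> V -> R) : Prop :=
  (forall a x1 x2 y, b (a *: x1 + x2) y = a * b x1 y + b x2 y) /\
  (forall a x y1 y2, b x (a *: y1 + y2) = a * b x y1 + b x y2).

Definition is_symm_form (b : V -> V -> R) : Prop :=
  forall x y, b x y = b y x.

Definition form_ker (b : V -> V -> R) (X : V) : Prop :=
  forall Y, b X Y = 0.

Definition restr_ker (b : V -> V -> R) (U : V -> Prop) (X : V) : Prop :=
  U X /\ forall Y, U Y -> b X Y = 0.

Definition nondeg_on (b : V -> V -> R) (U : {vspace V}) : Prop :=
  forall X, X \in U -> (forall Y, Y \in U -> b X Y = 0) -> X = 0.

Definition negdef_on (b : V -> V -> R) (W : {vspace V}) : Prop :=
  forall X, X \in W -> X != 0 -> b X X < 0.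

Definition lorentzian_on (b : V -> V -> R) (U : {vspace V}) : Prop :=
  nondeg_on b U /\
  (exists W : {vspace V}, (W <= U)%VS /\ negdef_on b W /\ \dim W = 1%N) /\
  (forall W : {vspace V}, (W <= U)%VS -> negdef_on b W -> (\dim W <= 1)%N).

(* component of X in E i with respect to the decomposition V = sum_i E i
   (meaningful when the sum is direct) *)
Definition comp (r : nat) (E : 'I_r -> {vspace V}) (i : 'I_r) : 'End(V) :=
  sumv_pi_for (erefl (\sum_(j < r) E j)%VS) i.

Definition gpart (g : V -> V -> R) (r : nat) (E : 'I_r -> {vspace V})
  (i : 'I_r) (X Y : V) : R :=
  g (comp E i X) (comp E i Y).

(* bar g_alpha = sum_beta C_{beta alpha} g_beta + C_{r+1 alpha} theta (x) theta,
   with indices shifted to 0-based: E : 'I_k.+1 -> ..., the last block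
   (index ord_max = k, paper's E_r) is Lorentzian; C : 'M_(k.+2),
   row index k.+1 (ord_max) is the theta(x)theta coefficient, column 0
   is bar g_1 = g. *)
Definition gbar (g : V -> V -> R) (k : nat) (E : 'I_k.+1 -> {vspace V})
  (p : V) (C : 'M[R]_(k.+2)) (a : 'I_k.+2) (X Y : V) : R :=
  \sum_(b < k.+1) C (widen_ord (leqnSn _) b) a * gpart g E b X Y
  + C ord_max a * (g p X * g p Y).

End Forms.

(* Main.v *)
Require Import Defs.
From HB Require Import structures.
From mathcomp Require Import all_boot all_order all_algebra.
From mathcomp Require Import reals.
From Stdlib Require Import Classical.
From mathcomp Require Import ring.
Import Order.TTheory GRing.Theory Num.Theory.
Local Open Scope ring_scope.

Lemma g0l (R : realType) (V : vectType R) (g : V -> V -> R) :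
  is_bilin_form g -> forall y, g 0 y = 0.
Proof.
move=> [hl _] y; have := hl 1 0 0 y; rewrite scale1r addr0 mul1r.
by move=> h; apply: (@addrI _ (g 0 y)); rewrite addr0 -h.
Qed.

Lemma gDl (R : realType) (V : vectType R) (g : V -> V -> R) :
  is_bilin_form g -> forall x1 x2 y, g (x1 + x2) y = g x1 y + g x2 y.
Proof. by move=> [hl _] x1 x2 y; rewrite -[x1]scale1r hl mul1r scale1r. Qed.

Lemma gZl (R : realType) (V : vectType R) (g : V -> V -> R) :
  is_bilin_form g -> forall a x y, g (a *: x) y = a * g x y.
Proof.
move=> hb a x y; have := (proj1 hb) a x 0 y; rewrite addr0 => ->.
by rewrite g0l // addr0.
Qed.

Lemma gsuml (R : realType) (V : vectType R) (g : V -> V -> R) (I : Type)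
  (r : seq I) (P : pred I) (F : I -> V) y :
  is_bilin_form g -> g (\sum_(i <- r | P i) F i) y = \sum_(i <- r | P i) g (F i) y.
Proof.
move=> hb; apply: (big_morph (fun x => g x y)).
  by move=> ??; rewrite gDl. by rewrite g0l.
Qed.
Lemma comp_mem (R : realType) (V : vectType R) r (E : 'I_r -> {vspace V}) (i : 'I_r) (X : V) :
  Defs.comp E i X \in E i.
Proof. exact: memv_sum_pi. Qed.

Definition directv_sum_uniqueP (R : realType) (V : vectType R) r (Us : 'I_r -> {vspace V}) h :=
  elimT (@directv_sum_unique R V 'I_r predT Us) h.

Lemma comp_sum (R : realType) (V : vectType R) r (E : 'I_r -> {vspace V}) (X : V) :
  (\sum_(b < r) E b)%VS = fullv -> \sum_i Defs.comp E i X = X.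
Proof. by move=> hf; apply: sumv_pi_sum; rewrite hf memvf. Qed.

Lemma comp_uniq (R : realType) (V : vectType R) r (E : 'I_r -> {vspace V}) u :
  (\sum_(b < r) E b)%VS = fullv -> directv (\sum_(b < r) E b) ->
  (forall i, u i \in E i) -> forall i, Defs.comp E i (\sum_j u j) = u i.
Proof.
move=> hf hd hu i.
have := (@directv_sum_uniqueP _ _ _ _ hd (fun j => Defs.comp E j (\sum_j u j)) u).
move=> /(_ (fun j _ => comp_mem _ _ _ E j _) (fun j _ => hu j)).
rewrite comp_sum // eqxx => /esym /forall_inP /(_ i isT) /eqP //.
Qed.

Lemma comp_in (R : realType) (V : vectType R) r (E : 'I_r -> {vspace V}) (j : 'I_r) (X : V) (i : 'I_r) :
  (\sum_(b < r) E b)%VS = fullv -> directv (\sum_(b < r) E b) ->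
  X \in E j -> Defs.comp E i X = if i == j then X else 0.
Proof.
move=> hf hd hX.
have -> : X = \sum_l (if l == j then X else 0).
  by rewrite (bigD1 j) //= eqxx big1 ?addr0 // => l /negPf ->.
rewrite (comp_uniq _ _ _ E (fun l => if l == j then X else 0)) //.
  by rewrite -big_mkcond big_pred1_eq.
by move=> l; case: eqP => [->|]; rewrite ?mem0v.
Qed.

Lemma memsum_comp (R : realType) (V : vectType R) r (E : 'I_r -> {vspace V})
  (P : pred 'I_r) (Y : V) :
  (\sum_(b < r) E b)%VS = fullv -> directv (\sum_(b < r) E b) ->
  Y \in (\sum_(b < r | P b) E b)%VS -> forall b, ~~ P b -> Defs.comp E b Y = 0.
Proof.
move=> hf hd /memv_sumP [vs hvs ->] b nPb.
rewrite big_mkcond /= (comp_uniq _ _ _ E (fun i => if P i then vs i else 0)) //=.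
  by rewrite (negPf nPb).
by move=> i; case: ifP => Pi; rewrite ?mem0v ?hvs.
Qed.

Lemma comp_memsum (R : realType) (V : vectType R) r (E : 'I_r -> {vspace V})
  (P : pred 'I_r) (Y : V) :
  (\sum_(b < r) E b)%VS = fullv ->
  (forall b, ~~ P b -> Defs.comp E b Y = 0) -> Y \in (\sum_(b < r | P b) E b)%VS.
Proof.
move=> hf h; rewrite -(comp_sum _ _ _ E Y hf) (bigID P) /= [X in _ + X]big1 ?addr0.
  by apply: memv_sumr => i _; apply: comp_mem.
by move=> i; apply: h.
Qed.

Lemma g_comp (R : realType) (V : vectType R) (g : V -> V -> R) r
  (E : 'I_r -> {vspace V}) (X Y : V) (b : 'I_r) :
  is_bilin_form g -> (\sum_(b < r) E b)%VS = fullv ->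
  (forall b1 b2 : 'I_r, b1 != b2 ->
     forall X Y, X \in E b1 -> Y \in E b2 -> g X Y = 0) ->
  Y \in E b -> g X Y = g (Defs.comp E b X) Y.
Proof.
move=> hb hf ho hY; rewrite -{1}(comp_sum _ _ _ E X hf) gsuml // (bigD1 b) //=.
by rewrite big1 ?addr0 // => i hi; apply: (ho i b hi) => //; apply: comp_mem.
Qed.
Theorem lemma1 (R : realType) (V : vectType R) (g : V -> V -> R)
  (k : nat) (E : 'I_k.+1 -> {vspace V}) (p : V) (C : 'M[R]_(k.+2)) :
  is_bilin_form g -> is_symm_form g -> lorentzian_on g fullv ->
  (\sum_(b < k.+1) E b)%VS = fullv ->
  directv (\sum_(b < k.+1) E b) ->
  (forall b1 b2 : 'I_k.+1, b1 != b2 ->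
     forall X Y, X \in E b1 -> Y \in E b2 -> g X Y = 0) ->
  (forall b, nondeg_on g (E b)) ->
  lorentzian_on g (E ord_max) ->
  p \in E ord_max -> p != 0 -> g p p = 0 ->
  (forall X Y, gbar g E p C ord0 X Y = g X Y) ->
  (forall c : 'I_k.+2 -> R,
     (forall X Y, \sum_(a < k.+2) c a * gbar g E p C a X Y = 0) ->
     forall a, c a = 0) ->
  (forall a : 'I_k.+2, a != ord0 ->
     C (widen_ord (leqnSn _) ord_max) a = 0) ->
  forall a : 'I_k.+2, a != ord0 ->
  (C ord_max a = 0 ->
     (forall X, form_ker (gbar g E p C a) X <->
        X \in (\sum_(b < k.+1 | C (widen_ord (leqnSn _) b) a == 0%R) E b)%VS) /\
     (forall X, restr_ker g (form_ker (gbar g E p C a)) X <-> X = 0)) /\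
  (C ord_max a != 0 ->
     (forall X, form_ker (gbar g E p C a) X <->
        exists Y Z, Y \in (\sum_(b < k.+1 | (b < k)%N &&
                          (C (widen_ord (leqnSn _) b) a == 0%R)) E b)%VS /\
                    Z \in E ord_max /\ g p Z = 0 /\ X = Y + Z) /\
     (forall X, restr_ker g (form_ker (gbar g E p C a)) X <->
        exists t : R, X = t *: p)).
Proof.
move=> hb hs _ hf hd ho hnd _ hp hp0 hpp _ _ hCk a ha.
pose c (b : 'I_k.+1) := C (widen_ord (leqnSn _) b) a.
pose cl := C ord_max a.
pose mx : 'I_k.+1 := ord_max.
have cmx : c mx = 0 by exact: hCk.
have g0r : forall x, g x 0 = 0 by move=> x; rewrite hs g0l.
have gDr : forall x y1 y2, g x (y1 + y2) = g x y1 + g x y2.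
  by move=> x y1 y2; rewrite hs gDl // !(hs _ x).
have gZr : forall t x y, g x (t *: y) = t * g x y.
  by move=> t x y; rewrite hs gZl // (hs _ x).
have gbarE : forall X Y j, Y \in E j ->
    gbar g E p C a X Y = c j * g (Defs.comp E j X) Y + cl * (g p X * g p Y).
  move=> X Y j hY; rewrite /gbar /gpart (bigD1 j) //= big1 ?addr0.
    by rewrite (comp_in _ _ _ E j Y j) // eqxx.
  by move=> i hi; rewrite (comp_in _ _ _ E j Y i) // (negPf hi) g0r mulr0.
have pY : forall Y j, Y \in E j -> j != mx -> g p Y = 0.
  by move=> Y j hY hj; apply: (ho mx j) => //; rewrite eq_sym.
have [W0 [hW0 hW0p]] : exists W0, W0 \in E mx /\ g p W0 != 0.
  apply: NNPP => hn; apply/(negP hp0)/eqP; apply: (hnd mx p hp) => Y hY.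
  by apply/eqP; apply: contraT => hY'; case: hn; exists Y.
have hK : forall X, form_ker (gbar g E p C a) X <->
    (forall b, c b != 0 -> Defs.comp E b X = 0) /\ (cl != 0 -> g p X = 0).
  move=> X; split.
    move=> hX; split.
      move=> b hcb; have hbm : b != mx by apply/eqP => e; move: hcb; rewrite e cmx eqxx.
      apply: (hnd b) => [|Y hY]; first exact: comp_mem.
      have := hX Y; rewrite (gbarE X Y b hY) (pY Y b hY hbm) !mulr0 addr0.
      by move/eqP; rewrite mulf_eq0 (negPf hcb) /= => /eqP.
    move=> hcl; have := hX W0; rewrite (gbarE X W0 mx hW0) cmx mul0r add0r.
    by move/eqP; rewrite !mulf_eq0 (negPf hcl) (negPf hW0p) orbF /= => /eqP.
  move=> [h1 h2] Y; rewrite /gbar /gpart big1 ?add0r.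
    have [->|hcl] := eqVneq (C ord_max a) 0; first by rewrite mul0r.
    by rewrite h2 // mul0r mulr0.
  move=> b _; have [->|hcb] := eqVneq (C (widen_ord (leqnSn _) b) a) 0; first by rewrite mul0r.
  by rewrite h1 // g0l // mulr0.
split.
  move=> hcl0; split.
    move=> X; rewrite hK; split.
      move=> [h1 _]; apply: comp_memsum => // b hb0; exact: h1.
    move=> hX; split; last by rewrite /cl hcl0 eqxx.
    move=> b hb0; exact: (memsum_comp _ _ _ E _ X hf hd hX b hb0).
  move=> X; split.
    move=> [hX horth]; have [h1 _] := (proj1 (hK X) hX).
    rewrite -(comp_sum _ _ _ E X hf) big1 // => b _.
    have [hcb|hcb] := eqVneq (c b) 0; last exact: h1.
    apply: (hnd b); first exact: comp_mem.
    move=> Y hY; rewrite -(g_comp _ _ g _ E X Y b) //; apply: horth; apply/hK; split.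
      move=> b' hb'; rewrite (comp_in _ _ _ E b Y b') //; case: eqP => // e.
      by move: hb'; rewrite e hcb eqxx.
    by rewrite /cl hcl0 eqxx.
  move=> ->; split.
    apply/hK; split; last by rewrite g0r.
    by move=> b _; rewrite linear0.
  by move=> Y _; rewrite g0l.
move=> hcl; split.
  move=> X; rewrite hK; split.
    move=> [h1 h2].
    exists (\sum_(b < k.+1 | (b < k)%N && (C (widen_ord (leqnSn _) b) a == 0%R)) Defs.comp E b X).
    exists (Defs.comp E mx X).
    split; first by apply: memv_sumr => b _; exact: comp_mem.
    split; first exact: comp_mem.
    split; first by rewrite hs -(g_comp _ _ g _ E X p mx) // hs; exact: h2.
    rewrite -{1}(comp_sum _ _ _ E X hf)
      (bigID (fun b : 'I_k.+1 => (b < k)%N && (C (widen_ord (leqnSn _) b) a == 0%R))) /=.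
    congr (_ + _).
    rewrite (bigD1 mx) /=; last by rewrite ltnn.
    rewrite big1 ?addr0 // => i /andP [hnP him].
    have hik : (i < k)%N.
      have := ltn_ord i; rewrite ltnS leq_eqVlt => /orP [/eqP e|//].
      by move: him; rewrite -(inj_eq val_inj) /= e eqxx.
    move: hnP; rewrite hik /= => hci; exact: h1.
  move=> [Y [Z [hY [hZ [hpZ ->]]]]]; split.
    move=> b hcb.
    have hbm : b != mx by apply/eqP => e; move: hcb; rewrite e cmx eqxx.
    rewrite linearD /= (memsum_comp _ _ _ E _ Y hf hd hY b);
      last by apply/nandP; right.
    by rewrite (comp_in _ _ _ E mx Z b) // (negPf hbm) addr0.
  move=> _; rewrite gDr hpZ addr0 hs (g_comp _ _ g _ E Y p mx) //.
  by rewrite (memsum_comp _ _ _ E _ Y hf hd hY mx) ?g0l //= ltnn.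
move=> X; split.
  move=> [hX horth]; have [h1 h2] := (proj1 (hK X) hX).
  have hXm : X = Defs.comp E mx X.
    rewrite -{1}(comp_sum _ _ _ E X hf) (bigD1 mx) //= big1 ?addr0 // => b hbm.
    have [hcb|hcb] := eqVneq (c b) 0; last exact: h1.
    apply: (hnd b); first exact: comp_mem.
    move=> Y hY; rewrite -(g_comp _ _ g _ E X Y b) //; apply: horth; apply/hK; split.
      move=> b' hb'; rewrite (comp_in _ _ _ E b Y b') //; case: eqP => // e.
      by move: hb'; rewrite e hcb eqxx.
    move=> _; exact: (pY Y b hY hbm).
  have hZ : Defs.comp E mx X \in E mx by exact: comp_mem.
  set Z := Defs.comp E mx X in hXm hZ.
  have hZW : forall W, W \in E mx -> g p W = 0 -> g Z W = 0.
    move=> W hW hpW; rewrite -hXm; apply: horth; apply/hK; split; last by [].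
    move=> b' hb'; rewrite (comp_in _ _ _ E mx W b') //; case: eqP => // e.
    by move: hb'; rewrite e cmx eqxx.
  exists (g Z W0 / g p W0); rewrite hXm.
  apply/eqP; rewrite -subr_eq0; apply/eqP.
  apply: (hnd mx); first by rewrite memvB // memvZ.
  move=> W hW.
  have := hZW (W - (g p W / g p W0) *: W0) (memvB hW (memvZ _ hW0)).
  rewrite gDr -scaleNr gZr mulNr divfK // subrr => /(_ erefl).
  rewrite gDr -scaleNr gZr => h.
  rewrite gDl // gZl // -h; ring.
move=> [t ->]; split.
  apply/hK; split.
    move=> b hcb; rewrite (comp_in _ _ _ E mx (t *: p) b) ?memvZ //.
    by case: eqP => // e; move: hcb; rewrite e cmx eqxx.
  by move=> _; rewrite gZr hpp mulr0.
by move=> Y /hK [_ h]; rewrite gZl // h // mulr0.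
Qed.
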